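(* Let $\mathcal H=\{h_1,\dots,h_k\}$ be an admissible set of $k\ge2$ distinct integers with $|h_i|\le h$ for all $i$. Then \[ 1\ll\beta(\mathcal H)\ll \log\log 10h, \] and there is a constant $b_k$ depending only on $k$ such that \[ \mathfrak S(\mathcal H)\ll(\log\log 10h)^{b_k}. \] The implied constants depend only on $k$.
   Context: For a prime $p$, $\nu_p$ is the number of distinct residue classes mod $p$ containing an element of $\mathcal H$. The set $\mathcal H$ is admissible if $\nu_p<p$ for all primes $p$. Define \[ \beta(\mathcal H)=\sum_p\frac{(k-\nu_p)\log p}{p},\qquad \mathfrak S(\mathcal H)=\prod_p\Big(1-\frac{\nu_p}{p}\Big)\Big(1-\frac1p\Big)^{-k}. \] *)

(* Defs.v *)
From HB Require Import structures.
From mathcomp Require Import all_boot all_order all_algebra.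
From mathcomp Require Import all_classical all_reals all_analysis.
Set Implicit Arguments. Unset Strict Implicit. Unset Printing Implicit Defensive.
Import Order.TTheory GRing.Theory Num.Theory numFieldNormedType.Exports.
Local Open Scope ring_scope.

Definition nu (H : seq int) (p : nat) : nat :=
  size (undup [seq (x %% p%:Z)%Z | x <- H]).

Definition admissible (H : seq int) : Prop :=
  forall p : nat, prime p -> (nu H p < p)%N.

Definition beta_partial (R : realType) (H : seq int) (N : nat) : R :=
  \sum_(p < N | prime p) (((size H - nu H p)%N)%:R * ln (p%:R : R) / p%:R).

Definition beta (R : realType) (H : seq int) : R := limn (beta_partial R H).

Definition sing_partial (R : realType) (H : seq int) (N : nat) : R :=
  \prod_(p < N | prime p)
     ((1 - (nu H p)%:R / p%:R) * (1 - (p%:R : R)^-1) ^- (size H)).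

Definition singular_series (R : realType) (H : seq int) : R :=
  limn (sing_partial R H).

(* Main.v *)
Require Import Defs.
From HB Require Import structures.
From mathcomp Require Import all_boot all_order all_algebra.
From mathcomp Require Import all_classical all_reals all_analysis.
From mathcomp Require Import ring lra zify.
Import Order.TTheory GRing.Theory Num.Theory numFieldNormedType.Exports.
Local Open Scope ring_scope.

Section Gen.
Variable R : realType.

Lemma ln_ge1Vx (x : R) : 0 < x -> 1 - x^-1 <= ln x.
Proof.
move=> x0.
have h := @le_ln1Dx R (x^-1 - 1).
have : -1 < x^-1 - 1 by rewrite ltrBrDr addrC subrr invr_gt0.
move=> /h; rewrite addrC subrK lnV ?posrE //.
lra.
Qed.

Lemma ln_prod (I : Type) (r : seq I) (P : pred I) (f : I -> R) :
  (forall i, P i -> 0 < f i) ->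
  ln (\prod_(i <- r | P i) f i) = \sum_(i <- r | P i) ln (f i).
Proof.
move=> hf; elim: r => [|a r IH]; first by rewrite !big_nil ln1.
rewrite !big_cons; case: ifP => Pa //.
rewrite lnM ?IH // posrE; first exact: hf.
by apply: prodr_gt0 => i /hf.
Qed.

Lemma sum_le_sub (N N' : nat) (P Q : pred nat) (F : nat -> R) :
  (forall i, (i < N)%N -> P i -> (i < N')%N && Q i) ->
  (forall i, (i < N')%N -> Q i -> 0 <= F i) ->
  \sum_(0 <= i < N | P i) F i <= \sum_(0 <= i < N' | Q i) F i.
Proof.
move=> hPQ hF.
rewrite (big_nat_widen 0 N (maxn N N')) ?leq_maxl //.
rewrite [X in _ <= X](big_nat_widen 0 N' (maxn N N')) ?leq_maxr //.
rewrite big_mkcond [X in _ <= X]big_mkcond /=.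
apply: ler_sum_nat => i _.
case hP: (P i); case hi: (i < N)%N => /=.
- by move: (hPQ i hi hP) => /andP[-> ->].
- by case: ifP => // /andP[h1 h2]; apply: hF.
- by case: ifP => // /andP[h1 h2]; apply: hF.
- by case: ifP => // /andP[h1 h2]; apply: hF.
Qed.

End Gen.

Lemma dvd_prod_primes (N m : nat) (f : nat -> nat) (P : pred nat) :
  (0 < m)%N -> (forall p, P p -> prime p) ->
  (forall p, (p < N)%N -> P p -> p ^ f p %| m)%N ->
  (\prod_(0 <= p < N | P p) p ^ f p %| m)%N.
Proof.
move=> m0 hP; elim: N => [|N IH] h; first by rewrite big_nil dvd1n.
rewrite big_mkcond big_nat_recr //= -big_mkcond /=.
case hN: (P N); last by rewrite muln1; apply: IH => p hp; apply: h; lia.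
rewrite Gauss_dvd.
  rewrite IH ?h //; last by move=> p hp; apply: h; lia.
apply: coprimeXr; rewrite big_mkcond /=.
have pN := hP _ hN.
elim: {1 3}N (leqnn N) => [|n IHn] hn; first by rewrite big_nil coprime1n.
rewrite big_nat_recr //= coprimeMl IHn; last lia.
case: ifP => hn' /=; last by rewrite coprime1n.
apply: coprimeXl; rewrite prime_coprime ?hP // dvdn_prime2 ?hP //.
apply/eqP; lia.
Qed.

Lemma fact_le_pow n : (n`! <= n ^ n)%N.
Proof.
elim: n => // n IH; rewrite factS expnS leq_mul //.
apply: (leq_trans IH); case: n {IH} => // n; rewrite leq_exp2r //.
Qed.

Section Mert.
Variable R : realType.

Lemma mertens n : (1 <= n)%N ->
  \sum_(0 <= p < n.+1 | prime p) ln (p%:R : R) / p%:R <= 2 * ln (n%:R : R).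
Proof.
move=> n1.
have hd : (\prod_(0 <= p < n.+1 | prime p) p ^ (n %/ p) %| n`!)%N.
  apply: dvd_prod_primes => // [|p _ pp]; first exact: fact_gt0.
  rewrite pfactor_dvdn ?fact_gt0 // logn_fact // big_ltn ?ltnS // expn1.
  exact: leq_addr.
have hle := dvdn_leq (fact_gt0 n) hd.
have n0 : (0 : R) < n%:R by rewrite ltr0n; lia.
have key : \sum_(0 <= p < n.+1 | prime p) (n %/ p)%:R * ln (p%:R : R)
           <= n%:R * ln (n%:R : R).
  have -> : \sum_(0 <= p < n.+1 | prime p) (n %/ p)%:R * ln (p%:R : R)
     = ln (\prod_(0 <= p < n.+1 | prime p) (p%:R : R) ^+ (n %/ p)).
    rewrite ln_prod; last first.
      by move=> i pi; apply: exprn_gt0; rewrite ltr0n prime_gt0.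
    apply: eq_bigr => i pi; rewrite lnXn ?mulr_natl // ltr0n prime_gt0 //.
  rewrite mulr_natl -lnXn //.
  have -> : \prod_(0 <= p < n.+1 | prime p) (p%:R : R) ^+ (n %/ p)
     = (\prod_(0 <= p < n.+1 | prime p) p ^ (n %/ p))%:R.
    by rewrite natr_prod; apply: eq_bigr => i _; rewrite natrX.
  rewrite ler_ln ?posrE.
  - rewrite -natrX ler_nat (leq_trans hle) // fact_le_pow //.
  - rewrite ltr0n prodn_gt0 // => i; rewrite expn_gt0.
    by case: i => //= i; rewrite orbT.
  - exact: exprn_gt0.
have -> : 2 * ln (n%:R : R) = 2 / n%:R * (n%:R * ln n%:R).
  by field; rewrite lt0r_neq0.
apply: le_trans; last by apply: ler_wpM2l; [rewrite divr_ge0 // ler0n|exact: key].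
rewrite mulr_sumr big_nat_cond [X in _ <= X]big_nat_cond.
apply: ler_sum => p /andP[/andP[_ hp] pp].
have p0 : (0 < p)%N by exact: prime_gt0.
have hnat : (n <= 2 * (n %/ p) * p)%N.
  have := div.divn_eq n p; have := ltn_pmod n p0.
  have : (0 < n %/ p)%N by rewrite divn_gt0 //; lia.
  move: (n %/ p)%N (n %% p)%N => q r; nia.
have hR : (n%:R : R) <= 2 * (n %/ p)%:R * p%:R.
  by rewrite -[2]/(2%:R) -!natrM ler_nat.
have lp : 0 <= ln (p%:R : R) by rewrite ln_ge0 // ler1n.
have p0R : (0 : R) < p%:R by rewrite ltr0n.
rewrite -subr_ge0.
have -> : 2 / n%:R * ((n %/ p)%N%:R * ln (p%:R : R)) - ln (p%:R : R) / p%:R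
  = ln (p%:R : R) * (2 * (n %/ p)%N%:R * p%:R - n%:R) / (n%:R * p%:R).
  by field; rewrite !lt0r_neq0.
apply: divr_ge0; first by apply: mulr_ge0 => //; rewrite subr_ge0.
by apply: mulr_ge0; apply: ltW.
Qed.

End Mert.

Section Abel.
Variable R : realType.

Definition Sr N := \sum_(0 <= p < N.+1 | prime p) (p%:R : R)^-1.
Definition Ar N := \sum_(0 <= p < N.+1 | prime p) ln (p%:R : R) / p%:R.

Lemma Ar_ge0 N : 0 <= Ar N.
Proof.
apply: sumr_ge0 => p pp; apply: divr_ge0; last exact: ler0n.
by rewrite ln_ge0 // ler1n prime_gt0.
Qed.

Lemma abel N : (2 <= N)%N ->
  Sr N <= Ar N / ln (N%:R : R) + 2 * (ln (ln (N%:R : R)) - ln (ln (2 : R))).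
Proof.
elim: N => // N IH hN.
have l2 : (0 : R) < ln 2 by rewrite ln_gt0 // ltr1n.
case: (ltnP N 2) => hN2.
  have -> : N = 1%N by lia.
  rewrite /Sr /Ar big_mkcond [X in _ <= X / _ + _]big_mkcond !big_nat_recr //= big_nil.
  rewrite big_nil.
  rewrite /= subrr mulr0 addr0 !add0r.
  by rewrite addr0 mulrAC divff ?mul1r // lt0r_neq0.
have {}IH := IH hN2.
set x : R := N%:R; set y : R := N.+1%:R.
have x1 : 1 < x by rewrite ltr1n.
have y1 : 1 < y by rewrite ltr1n.
have lx : 0 < ln x by rewrite ln_gt0.
have ly : 0 < ln y by rewrite ln_gt0.
have lxy : ln x <= ln y by rewrite ler_ln ?posrE ?ler_nat //; lra.
have eS : Sr N.+1 = Sr N + (if prime N.+1 then y^-1 else 0).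
  by rewrite /Sr big_mkcond big_nat_recr //= -big_mkcond.
have eA : Ar N.+1 = Ar N + (if prime N.+1 then ln y / y else 0).
  by rewrite /Ar big_mkcond big_nat_recr //= -big_mkcond.
have es : (if prime N.+1 then y^-1 else 0) = (if prime N.+1 then ln y / y else 0) / ln y.
  case: ifP => _; last by rewrite mul0r.
  by field; rewrite !lt0r_neq0 //; lra.
rewrite eS eA es.
have hM : Ar N <= 2 * ln x by apply: mertens; lia.
have hA := Ar_ge0 N.
have hl : 1 - ln x / ln y <= ln (ln y) - ln (ln x).
  rewrite -ln_div ?posrE //.
  have := @ln_ge1Vx R _ (divr_gt0 ly lx); rewrite invf_div //.
have e1 : Ar N / ln x - Ar N / ln y = Ar N * ((ln y - ln x) / (ln x * ln y)).
  by field; rewrite !lt0r_neq0.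
have e2 : 2 * (1 - ln x / ln y) = (2 * ln x) * ((ln y - ln x) / (ln x * ln y)).
  by field; rewrite !lt0r_neq0.
have hf : 0 <= (ln y - ln x) / (ln x * ln y).
  by apply: divr_ge0; [rewrite subr_ge0 | apply: mulr_ge0; apply: ltW].
have key : Ar N / ln x - Ar N / ln y <= 2 * (ln (ln y) - ln (ln x)).
  rewrite e1; apply: (le_trans (ler_wpM2r hf hM)); rewrite -e2; lra.
set a := (if prime N.+1 then _ else _).
rewrite mulrDl; lra.
Qed.

Lemma Sr_bound N : (2 <= N)%N ->
  Sr N <= 2 + 2 * (ln (ln (N%:R : R)) - ln (ln (2 : R))).
Proof.
move=> hN; apply: (le_trans (@abel N hN)); rewrite lerD2r.
have lx : 0 < ln (N%:R : R) by rewrite ln_gt0 // ltr1n.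
by rewrite ler_pdivrMr // mertens //; lia.
Qed.

End Abel.

Definition Dp (H : seq int) : nat :=
  (\prod_(x <- H) \prod_(y <- H) maxn 1 (absz (x - y)))%N.

Lemma Dp_gt0 H : (0 < Dp H)%N.
Proof. by apply: prodn_gt0 => x; apply: prodn_gt0 => y; rewrite leq_max. Qed.

Lemma dvd_Dp H x y : x \in H -> y \in H -> x != y -> (absz (x - y) %| Dp H)%N.
Proof.
move=> xH yH xy.
rewrite /Dp (big_rem x xH) /=; apply: dvdn_mulr.
rewrite (big_rem y yH) /=; apply: dvdn_mulr.
have : (0 < absz (x - y))%N by rewrite absz_gt0 subr_eq0.
by move=> h; rewrite (maxn_idPr h).
Qed.

Lemma nu_le H p : (nu H p <= size H)%N.
Proof. by rewrite /nu (leq_trans (size_undup _)) // size_map. Qed.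

Lemma nu_full H p : uniq H -> prime p -> ~~ (p %| Dp H)%N -> nu H p = size H.
Proof.
move=> uH pp nd; rewrite /nu undup_id ?size_map // map_inj_in_uniq //.
move=> x y xH yH exy; apply/eqP; apply: contraNT nd => xy.
have : (p%:Z %| x - y)%Z by rewrite -eqz_mod_dvd exy.
rewrite dvdzE /= => hp.
by apply: (dvdn_trans hp); apply: dvd_Dp.
Qed.

Lemma bad_dvd H p : uniq H -> prime p -> (nu H p < size H)%N -> (p %| Dp H)%N.
Proof.
move=> uH pp; apply: contraTT => nd; by rewrite nu_full // ltnn.
Qed.

Section R.
Variable R : realType.

Lemma prod_const_seq (T : Type) (s : seq T) (c : R) :
  \prod_(y <- s) c = c ^+ size s.
Proof. by elim: s => [|a s IH]; rewrite ?big_nil ?expr0 // big_cons IH exprS. Qed.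

Lemma Dp_le H (h : R) : 1 <= h -> (forall x, x \in H -> (`|x|%:~R : R) <= h) ->
  ((Dp H)%:R : R) <= (2 * h) ^+ (size H * size H).
Proof.
move=> h1 hH.
rewrite /Dp natr_prod exprM -prod_const_seq.
apply: (@le_trans _ _ (\prod_(x <- H) (2 * h) ^+ size H)); last first.
  by rewrite prod_const_seq.
rewrite [X in X <= _]big_seq_cond [X in _ <= X]big_seq_cond.
apply: ler_prod => x /andP[xH _]; rewrite natr_prod prodr_ge0 //=.
rewrite -prod_const_seq [X in X <= _]big_seq_cond [X in _ <= X]big_seq_cond.
apply: ler_prod => y /andP[yH _]; rewrite ler0n /=.
case: (leqP (absz (x - y)) 1) => hxy.
  lra.
rewrite natr_absz intr_norm intrB.
apply: (le_trans (ler_normB _ _)).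
have := hH x xH; have := hH y yH; rewrite !intr_norm; lra.
Qed.

End R.

Section R.
Variable R : realType.

Lemma sum_ln_dvd (D N : nat) : (0 < D)%N ->
  \sum_(0 <= p < N | prime p && (p %| D)%N) ln (p%:R : R) <= ln (D%:R : R).
Proof.
move=> D0.
have hd : (\prod_(0 <= p < N | prime p && (p %| D)%N) p ^ 1 %| D)%N.
  apply: dvd_prod_primes => // [p /andP[] //|p _ /andP[_ pD]].
  by rewrite expn1.
have hle : (\prod_(0 <= p < N | prime p && (p %| D)%N) p <= D)%N.
  have e : (\prod_(0 <= p < N | prime p && (p %| D)%N) p
           = \prod_(0 <= p < N | prime p && (p %| D)%N) p ^ 1)%N.
    by apply: eq_bigr => i _; rewrite expn1.
  by rewrite e; exact: dvdn_leq D0 hd.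
rewrite -ln_prod; last by move=> i /andP[pi _]; rewrite ltr0n prime_gt0.
rewrite ler_ln ?posrE ?ltr0n //.
  by rewrite -natr_prod ler_nat.
by apply: prodr_gt0 => i /andP[pi _]; rewrite ltr0n prime_gt0.
Qed.

Lemma ln2_bounds : 1/2 <= ln (2 : R) <= 1.
Proof.
apply/andP; split.
  have := @ln_ge1Vx R 2 ltac:(lra); lra.
have := @le_ln1Dx R 1 ltac:(lra); rewrite (_ : 1 + 1 = 2) //; lra.
Qed.

Definition Lg (D : nat) : nat := (trunc_log 2 D).+2.

Lemma Lg_ge2 D : (2 <= Lg D)%N. Proof. by []. Qed.

Lemma lnD_Lg D : (0 < D)%N -> ln (D%:R : R) <= (Lg D)%:R * ln 2.
Proof.
move=> D0.
have h1 : (D < 2 ^ Lg D)%N.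
  apply: (leq_trans (trunc_log_ltn D (ltnSn 1))).
  by rewrite leq_exp2l.
rewrite mulr_natl -lnXn // ler_ln ?posrE ?ltr0n ?exprn_gt0 //.
by rewrite -natrX ler_nat ltnW.
Qed.

Lemma Lg_le D : (0 < D)%N -> ((Lg D)%:R : R) <= 2 * ln (D%:R : R) + 2.
Proof.
move=> D0.
have h1 : (2 ^ trunc_log 2 D <= D)%N by apply: trunc_logP.
have h2 : (trunc_log 2 D)%:R * ln (2 : R) <= ln (D%:R : R).
  rewrite mulr_natl -lnXn // ler_ln ?posrE ?ltr0n ?exprn_gt0 //.
  by rewrite -natrX ler_nat.
have /andP[l2a l2b] := @ln2_bounds.
rewrite /Lg -[(trunc_log 2 D).+2]addn2 natrD.
have : 0 <= ((trunc_log 2 D)%:R : R) by [].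
nra.
Qed.

End R.

Section B.
Variable R : realType.
Variable H : seq int.
Hypothesis uH : uniq H.
Hypothesis adm : admissible H.

Definition bterm (p : nat) : R :=
  ((size H - nu H p)%N%:R * ln (p%:R : R) / p%:R).

Lemma bterm_ge0 p : 0 <= bterm p.
Proof.
rewrite /bterm; case: p => [|p]; first by rewrite invr0 mulr0.
by apply: divr_ge0 => //; apply: mulr_ge0 => //; rewrite ln_ge0 // ler1n.
Qed.

Lemma bp_nat N : beta_partial R H N = \sum_(0 <= p < N | prime p) bterm p.
Proof. by rewrite /beta_partial big_mkord. Qed.

Lemma notdvd_big N : (Dp H < N)%N -> ~~ (N %| Dp H)%N.
Proof.
move=> hN; apply/negP => hd; have := dvdn_leq (Dp_gt0 H) hd; lia.
Qed.

Lemma bp_step N : (Dp H < N)%N -> beta_partial R H N.+1 = beta_partial R H N.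
Proof.
move=> hN; rewrite !bp_nat big_mkcond big_nat_recr //= -big_mkcond.
case: ifP => pN; last by rewrite addr0.
by rewrite /bterm nu_full ?notdvd_big // subnn !mul0r addr0.
Qed.

Lemma bp_const m : beta_partial R H ((Dp H).+1 + m) = beta_partial R H (Dp H).+1.
Proof.
elim: m => [|m IH]; first by rewrite addn0.
by rewrite addnS bp_step ?IH //; lia.
Qed.

Lemma beta_eq : beta R H = beta_partial R H (Dp H).+1.
Proof.
rewrite /beta; apply: cvg_lim => //.
rewrite -(cvg_shiftn (Dp H).+1).
rewrite (_ : [sequence _]_n = fun _ => beta_partial R H (Dp H).+1).
  exact: cvg_cst.
by apply/funext => n /=; rewrite addnC bp_const.
Qed.

Lemma beta_lower : (2 <= size H)%N -> ln 2 / 2 <= beta R H.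
Proof.
move=> k2.
rewrite beta_eq -(bp_const 2) bp_nat.
have e : \sum_(0 <= p < 3 | p == 2%N) bterm p = bterm 2.
  by rewrite big_mkcond !big_nat_recr //= big_nil !add0r.
apply: le_trans (@sum_le_sub R 3 _ (fun p => p == 2%N) _ _ _ _); last first.
- by move=> i _ _; apply: bterm_ge0.
- by move=> i _ /eqP ->; rewrite /=; apply/andP; split => //; lia.
rewrite e /bterm.
have n2 := adm 2%N (isT : prime 2).
have h1 : (1 : R) <= (size H - nu H 2)%N%:R by rewrite ler1n; lia.
have l2 : 0 <= ln (2 : R) by rewrite ln_ge0 //; lra.
nra.
Qed.

Lemma beta_upper : beta R H <=
  (size H)%:R * (2 * ln ((Lg (Dp H))%:R : R) + ln ((Dp H)%:R : R) / (Lg (Dp H))%:R).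
Proof.
set D := Dp H; set L := Lg D; set N0 := D.+1.
rewrite beta_eq bp_nat.
apply: (@le_trans _ _ (\sum_(0 <= p < N0 | prime p)
    (if (p %| D)%N then (size H)%:R * (ln (p%:R : R) / p%:R) else 0))).
  apply: ler_sum => p pp; case: ifP => pD.
    rewrite /bterm -mulrA ler_wpM2r ?ler_nat ?leq_subr //.
    by apply: divr_ge0 => //; rewrite ln_ge0 // ler1n prime_gt0.
  by rewrite /bterm nu_full ?pD // subnn !mul0r.
rewrite -big_mkcondr -mulr_sumr ler_wpM2l //.
rewrite (bigID (fun p => p <= L)%N) /=.
have lnp p : prime p -> 0 <= ln (p%:R : R) by move=> pp; rewrite ln_ge0 // ler1n prime_gt0.
apply: lerD.
  apply: (@le_trans _ _ (\sum_(0 <= p < L.+1 | prime p) ln (p%:R : R) / p%:R)).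
    apply: sum_le_sub => [i _ /andP[/andP[pi _] iL]|i _ pi].
      by rewrite pi andbT ltnS.
    by apply: divr_ge0; [exact: lnp|].
  by apply: mertens.
have L0 : (0 : R) < L%:R by rewrite ltr0n /L.
apply: (@le_trans _ _ (\sum_(0 <= p < N0 | (prime p && (p %| D)%N) && ~~ (p <= L)%N)
    ln (p%:R : R) / L%:R)).
  apply: ler_sum => p /andP[/andP[pp _] pL]; rewrite ler_wpM2l ?lnp //.
  have hLp : (L%:R : R) <= p%:R by rewrite ler_nat; lia.
  have p0 : (0:R) < p%:R by rewrite ltr0n prime_gt0.
  by rewrite lef_pV2 ?posrE.
apply: (@le_trans _ _ (\sum_(0 <= p < N0 | prime p && (p %| D)%N) ln (p%:R : R) / L%:R)).
  apply: sum_le_sub => [i hi /andP[/andP[pi pD] iL]|i _ /andP[pi _]].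
    by rewrite hi pi pD.
  by apply: divr_ge0; [exact: lnp|].
rewrite -mulr_suml ler_wpM2r // ?invr_ge0 //.
exact: sum_ln_dvd (Dp_gt0 H).
Qed.


End B.

Lemma bernoulli_le (R : realType) (t : R) n : 0 <= t <= 1 -> 1 - n%:R * t <= (1 - t) ^+ n.
Proof.
move=> /andP[t0 t1]; elim: n => [|n IH]; first by rewrite mul0r subr0 expr0.
rewrite exprS.
have h : (1 - t) * (1 - n%:R * t) <= (1 - t) * (1 - t) ^+ n.
  by rewrite ler_wpM2l // subr_ge0.
apply: le_trans h; rewrite -natr1.
have : 0 <= n%:R * t * t by apply: mulr_ge0 => //; apply: mulr_ge0.
nra.
Qed.

Section S.
Variable R : realType.
Variable H : seq int.
Hypothesis uH : uniq H.
Hypothesis adm : admissible H.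

Definition fac (p : nat) : R :=
  (1 - (nu H p)%:R / p%:R) * (1 - (p%:R : R)^-1) ^- (size H).

Lemma sp_nat N : sing_partial R H N = \prod_(0 <= p < N | prime p) fac p.
Proof. by rewrite /sing_partial big_mkord. Qed.

Lemma one_m_inv_gt0 p : prime p -> (0 : R) < 1 - (p%:R)^-1.
Proof.
move=> pp; have p2 : (2 <= p)%N by apply: prime_gt1.
rewrite subr_gt0 invf_lt1 ?ltr0n ?ltr1n //; lia.
Qed.

Lemma fac_gt0 p : prime p -> 0 < fac p.
Proof.
move=> pp; have hn := adm p pp.
have p0 : (0 : R) < p%:R by rewrite ltr0n prime_gt0.
apply: mulr_gt0.
  by rewrite subr_gt0 ltr_pdivrMr // mul1r ltr_nat.
by rewrite invr_gt0 exprn_gt0 // one_m_inv_gt0.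
Qed.

Lemma fac_le_exp p : prime p -> fac p <= expR ((size H)%:R * (2 / p%:R)).
Proof.
move=> pp; have hn := adm p pp.
have p2 : (2 <= p)%N by apply: prime_gt1.
set x : R := p%:R.
have x2 : 2 <= x by rewrite /x (ler_nat R 2).
have hi := one_m_inv_gt0 p pp; rewrite -/x in hi.
rewrite /fac -/x expRM_natl -exprVn.
have h1 : 0 <= (1 - x^-1)^-1 by rewrite invr_ge0 ltW.
have h2 : (1 - x^-1)^-1 <= expR (2 / x).
  have -> : (1 - x^-1)^-1 = 1 + (x - 1)^-1.
    by field; apply/andP; split; apply/negP => /eqP; lra.
  apply: (le_trans (expR_ge1Dx _)); rewrite ler_expR.
  rewrite -subr_ge0.
  have -> : 2 / x - (x - 1)^-1 = (x - 2) / (x * (x - 1)).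
    by field; apply/andP; split; apply/negP => /eqP; lra.
  by apply: divr_ge0; [lra | apply: mulr_ge0; lra].
have h3 : (1 - x^-1)^-1 ^+ size H <= expR (2 / x) ^+ size H.
  by apply: lerXn2r; rewrite ?nnegrE // expR_ge0.
have h4 : 0 <= 1 - (nu H p)%:R / x <= 1.
  have x0 : 0 < x by lra.
  apply/andP; split; last by rewrite lerBlDr lerDl divr_ge0.
  by rewrite subr_ge0 ler_pdivrMr // mul1r ler_nat ltnW.
apply: le_trans h3.
have h5 : 0 <= (1 - x^-1)^-1 ^+ size H by apply: exprn_ge0.
move: h4 => /andP[h4 h4']; nra.
Qed.

Lemma fac_le1 p : prime p -> ~~ (p %| Dp H)%N -> fac p <= 1.
Proof.
move=> pp nd; have hn := adm p pp.
have hk := nu_full H p uH pp nd; rewrite hk in hn.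
have p0 : (0 : R) < p%:R by rewrite ltr0n prime_gt0.
rewrite /fac hk -exprVn exprVn.
rewrite ler_pdivrMr ?exprn_gt0 ?one_m_inv_gt0 // mul1r.
have -> : (size H)%:R / p%:R = (size H)%:R * (p%:R : R)^-1 by [].
apply: bernoulli_le; rewrite invr_ge0 ltW //=.
by rewrite invf_le1 // ler1n prime_gt0.
Qed.

End S.

Section S.
Variable R : realType.
Variable H : seq int.
Hypothesis uH : uniq H.
Hypothesis adm : admissible H.

Lemma sp_step N : sing_partial R H N.+1 =
  sing_partial R H N * (if prime N then fac R H N else 1).
Proof. by rewrite !sp_nat big_mkcond big_nat_recr //= -big_mkcond. Qed.

Lemma sp_gt0 N : 0 < sing_partial R H N.
Proof. by rewrite sp_nat; apply: prodr_gt0 => p pp; apply: fac_gt0. Qed.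

Lemma sp_noninc : {homo (fun n => sing_partial R H (n + (Dp H).+1)) :
   n m / (n <= m)%N >-> m <= n}.
Proof.
have step n : sing_partial R H (n.+1 + (Dp H).+1) <= sing_partial R H (n + (Dp H).+1).
  rewrite addSn sp_step; case: ifP => pN; last by rewrite mulr1.
  rewrite ger_pMr ?sp_gt0 //; apply: fac_le1 => //.
  by apply: notdvd_big; lia.
move=> n m /subnK <-; elim: (m - n)%N => [|d IH] //=.
by apply: le_trans IH; rewrite addSn.
Qed.

Lemma sing_cvg_le : cvgn (sing_partial R H) /\
  singular_series R H <= sing_partial R H (Dp H).+1.
Proof.
set v := fun n => sing_partial R H (n + (Dp H).+1).
have hb : has_lbound (range v).
  by exists 0 => _ [n _ <-]; apply/ltW/sp_gt0.
have cv : cvgn v := nonincreasing_is_cvgn sp_noninc hb.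
have cu : (sing_partial R H @ \oo --> limn v)%classic.
  by rewrite -(cvg_shiftn (Dp H).+1); exact: cv.
split; first exact: cvgP cu.
rewrite /singular_series (cvg_lim _ cu) //.
exact: (nonincreasing_cvgn_ge sp_noninc cv 0).
Qed.

End S.

Section S.
Variable R : realType.
Variable H : seq int.
Hypothesis uH : uniq H.
Hypothesis adm : admissible H.

Lemma sp_N0_le : sing_partial R H (Dp H).+1 <=
  expR ((size H)%:R * 2 *
    \sum_(0 <= p < (Dp H).+1 | prime p && (p %| Dp H)%N) (p%:R : R)^-1).
Proof.
rewrite sp_nat.
apply: (@le_trans _ _ (\prod_(0 <= p < (Dp H).+1 | prime p)
   (if (p %| Dp H)%N then expR ((size H)%:R * (2 / p%:R)) else 1))).
  apply: ler_prod => p pp; rewrite ltW ?fac_gt0 //=.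
  case: ifP => pD; first exact: fac_le_exp.
  by apply: fac_le1 => //; rewrite pD.
rewrite -big_mkcondr -expR_sum ler_expR mulr_sumr.
by apply: ler_sum => p _; rewrite mulrA.
Qed.

Lemma inv_sum_le : \sum_(0 <= p < (Dp H).+1 | prime p && (p %| Dp H)%N) (p%:R : R)^-1
   <= Sr R (Lg (Dp H)) + 1.
Proof.
set D := Dp H; set L := Lg D; set N0 := D.+1.
rewrite (bigID (fun p => p <= L)%N) /=.
apply: lerD.
  apply: sum_le_sub => [i _ /andP[/andP[pi _] iL]|i _ pi].
    by rewrite pi andbT ltnS.
  by rewrite invr_ge0.
have L0 : (0 : R) < L%:R by rewrite ltr0n /L.
have l2 : (0 : R) < ln 2 by rewrite ln_gt0 //; lra.
apply: (@le_trans _ _ (\sum_(0 <= p < N0 | (prime p && (p %| D)%N) && ~~ (p <= L)%N)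
    ln (p%:R : R) / (L%:R * ln 2))).
  apply: ler_sum => p /andP[/andP[pp _] pL].
  have p0 : (0:R) < p%:R by rewrite ltr0n prime_gt0.
  have hLp : (L%:R : R) <= p%:R by rewrite ler_nat; lia.
  have h1 : p%:R^-1 <= (L%:R : R)^-1 by rewrite lef_pV2 ?posrE.
  apply: (le_trans h1).
  have h2 : ln (2 : R) <= ln p%:R.
    by rewrite ler_ln ?posrE // ?ler_nat ?prime_gt1 //; lra.
  rewrite -subr_ge0.
  have -> : ln (p%:R : R) / (L%:R * ln 2) - (L%:R)^-1 = (ln p%:R - ln 2) / (L%:R * ln 2).
    by field; rewrite !lt0r_neq0.
  by apply: divr_ge0; [lra | apply: mulr_ge0; apply: ltW].
apply: (@le_trans _ _ (\sum_(0 <= p < N0 | prime p && (p %| D)%N)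
    ln (p%:R : R) / (L%:R * ln 2))).
  apply: sum_le_sub => [i hi /andP[/andP[pi pD] iL]|i _ /andP[pi _]].
    by rewrite hi pi pD.
  apply: divr_ge0; first by rewrite ln_ge0 // ler1n prime_gt0.
  by apply: mulr_ge0; apply: ltW.
rewrite -mulr_suml ler_pdivrMr ?mulr_gt0 // mul1r.
apply: (le_trans (sum_ln_dvd R _ _ (Dp_gt0 H))).
exact: lnD_Lg R _ (Dp_gt0 H).
Qed.

End S.

Lemma h_ge1 (R : realType) (h : R) (H : seq int) : uniq H -> (2 <= size H)%N ->
  (forall x, x \in H -> (`|x|%:~R : R) <= h) -> 1 <= h.
Proof.
case: H => [|a [|b t]] //= /andP[/negP nab _] _ hH.
have [a0|a0] := eqVneq a 0.
  have b0 : b != 0 by apply/negP => /eqP b0; apply: nab; rewrite a0 b0 inE eqxx.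
  apply: le_trans (hH b _); last by rewrite !inE eqxx orbT.
  by rewrite ler1z; lia.
apply: le_trans (hH a _); last by rewrite !inE eqxx.
by rewrite ler1z; lia.
Qed.

Lemma ln10_gt1 (R : realType) : 1 < ln (10 : R).
Proof.
have -> : (10 : R) = 2 * 5 by rewrite -natrM.
rewrite lnM ?posrE //.
have /andP[l2 _] := @ln2_bounds R.
have := @ln_ge1Vx R 5 ltac:(lra).
lra.
Qed.

Theorem lemma6 (R : realType) (k : nat) : (2 <= k)%N ->
  exists c1 c2 c3 b : R, 0 < c1 /\
    forall (h : R) (H : seq int),
      uniq H -> size H = k -> admissible H ->
      (forall x, x \in H -> (`|x|%:~R : R) <= h) ->
      [/\ c1 <= beta R H,
          beta R H <= c2 * ln (ln (10 * h)),
          cvgn (sing_partial R H) &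
          singular_series R H <= c3 * (ln (ln (10 * h))) `^ b].
Proof.
move=> k2.
have l10 := @ln10_gt1 R.
set l0 : R := ln (ln 10).
have l0p : 0 < l0 by rewrite /l0 ln_gt0.
set c : R := (2 * k * k + 4)%N%:R.
have c1 : 1 <= c by rewrite /c ler1n; lia.
have lc : 0 <= ln c by rewrite ln_ge0.
set K1 : R := ln c / l0 + 1.
have K1p : 1 <= K1 by rewrite /K1 lerDr divr_ge0 // ltW.
have /andP[l2a l2b] := @ln2_bounds R.
set b : R := (4 * k)%N%:R.
exists (ln 2 / 2), (k%:R * (2 * K1 + l0^-1)),
  (expR (2 * k%:R * (3 - 2 * ln (ln (2 : R)))) * K1 `^ b), b.
split; first by apply: divr_gt0 => //; lra.
move=> h H uH sH adm hH.
have k2' : (2 <= size H)%N by rewrite sH.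
have h1 := @h_ge1 R h H uH k2' hH.
set ell := ln (ln (10 * h)).
have L10 : ln (10 : R) <= ln (10 * h).
  by rewrite ler_ln ?posrE //; nra.
have l10h : 1 < ln (10 * h) by lra.
have ellp : l0 <= ell by rewrite /ell /l0 ler_ln ?posrE //; lra.
have ell0 : 0 < ell by lra.
set D := Dp H; set L := Lg D.
have D0 : (0 < D)%N := Dp_gt0 H.
have D0R : (0 : R) < D%:R by rewrite ltr0n.
have lnD0 : 0 <= ln (D%:R : R) by rewrite ln_ge0 // ler1n.
have lnD : ln (D%:R : R) <= (k * k)%N%:R * ln (10 * h).
  have hD := @Dp_le R H h h1 hH; rewrite sH -/D in hD.
  have : ln (D%:R : R) <= ln ((2 * h) ^+ (k * k)).
    by rewrite ler_ln ?posrE ?exprn_gt0 //; lra.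
  rewrite lnXn; last lra.
  have : ln (2 * h) <= ln (10 * h) by rewrite ler_ln ?posrE; lra.
  move=> h2 h3; apply: (le_trans h3).
  by rewrite -[X in X <= _]mulr_natl ler_wpM2l.
have hL := Lg_le R D D0; rewrite -/L in hL.
have L2 : (2 : R) <= L%:R by rewrite (ler_nat R 2).
have Lc : (L%:R : R) <= c * ln (10 * h).
  rewrite /c natrD !natrM.
  have : 0 <= ((k * k)%N%:R : R) by [].
  rewrite natrM; nra.
have lnL0 : 0 < ln (L%:R : R) by rewrite ln_gt0; lra.
have lnL : ln (L%:R : R) <= K1 * ell.
  have : ln (L%:R : R) <= ln c + ell.
    rewrite /ell -lnM ?posrE; try nra.
    by rewrite ler_ln ?posrE; nra.
  have : ln c <= ln c / l0 * ell.
    rewrite -[X in X <= _]mulr1 -mulrA ler_wpM2l //.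
    by rewrite ler_pdivlMl // mulr1.
  rewrite /K1; lra.
have [cv sle] := sing_cvg_le R H uH adm.
split => //.
- have := beta_lower R H uH adm k2'; done.
- apply: (le_trans (beta_upper R H uH)); rewrite sH -/D -/L.
  have hq : ln (D%:R : R) / L%:R <= ln 2.
    rewrite ler_pdivrMr; last lra.
    by rewrite mulrC lnD_Lg.
  have hq' : ln (2 : R) <= l0^-1 * ell.
    have : 1 <= ell / l0 by rewrite ler_pdivlMr // mul1r.
    rewrite mulrC; lra.
  rewrite -mulrA ler_wpM2l //; nra.
- apply: (le_trans sle); apply: (le_trans (sp_N0_le R H uH adm)).
  rewrite sH -/D -/L.
  have hS := Sr_bound R L (Lg_ge2 D); rewrite -/L in hS.
  have hI := inv_sum_le R H uH; rewrite -/D -/L in hI.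
  have e1 : expR (k%:R * 2 * (2 + 2 * (ln (ln (L%:R : R)) - ln (ln (2 : R))) + 1))
      = expR (2 * k%:R * (3 - 2 * ln (ln (2 : R)))) * (ln (L%:R : R)) `^ b.
    have e2 : expR (ln (ln (L%:R:R)) * b) = (ln (L%:R:R)) `^ b by rewrite expRM lnK ?posrE.
    rewrite -e2 -expRD.
    congr expR; rewrite /b natrM; ring.
  apply: (@le_trans _ _ (expR (k%:R * 2 * (2 + 2 * (ln (ln (L%:R : R)) - ln (ln (2 : R))) + 1)))).
    rewrite ler_expR ler_wpM2l ?mulr_ge0 //; lra.
  rewrite e1 -[X in _ <= X]mulrA ler_wpM2l ?expR_ge0 //.
  have bp : 0 <= b by rewrite /b.
  rewrite -powRM; [|lra|lra].
  apply: ge0_ler_powR => //; rewrite ?nnegrE; lra.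
Qed.
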